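(* In the real projective plane, let $\Gamma$ be the degenerate conic given by a pair of distinct lines $g_1,g_2$, and let $\mathcal{C}^*$ be the degenerate dual conic given by a pair of distinct points $C_1,C_2$. Consider polygonal lines inscribed in $\Gamma$ and circumscribed about $\mathcal{C}^*$. Such a polygonal line is periodic with period $n$ if and only if $n=4$ and the lines $g_1$ and $g_2$ intersect the line $C_1C_2$ in a pair of points which is harmonically conjugate to the pair $C_1,C_2$.
   Context: $\mathcal{C}^*$ is the union of the pencils of lines through $C_1$ and through $C_2$. A polygonal line $A_1A_2\dots$ is inscribed in $\Gamma$ and circumscribed about $\mathcal{C}^*$ if its vertices lie alternately on $g_1$ and $g_2$ and its side lines $A_iA_{i+1}$ pass alternately through $C_1$ and $C_2$; it is periodic with period $n$ if $A_{i+n}=A_i$ for all $i$. Points $D_1,D_2$ on the line $C_1C_2$ form a pair harmonically conjugate to $C_1,C_2$ if the cross-ratio $(C_1,C_2;D_1,D_2)$ equals $-1$. *)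

(* Defs.v *)
(* The real projective plane over a real (ordered) field R:
   points and lines are nonzero row vectors of 'rV[R]_3 (homogeneous
   coordinates), taken up to a nonzero scalar factor. *)
From HB Require Import structures.
From mathcomp Require Import all_boot all_order all_algebra.
Set Implicit Arguments. Unset Strict Implicit. Unset Printing Implicit Defensive.
Import Order.TTheory GRing.Theory Num.Theory.
Local Open Scope ring_scope.

Definition dot (R : realFieldType) (u v : 'rV[R]_3) : R :=
  \sum_(i < 3) u 0 i * v 0 i.

Definition on (R : realFieldType) (p l : 'rV[R]_3) : Prop := dot p l = 0.

Definition same_pt (R : realFieldType) (p q : 'rV[R]_3) : Prop :=
  exists k : R, k != 0 /\ p = k *: q.

Definition collinear (R : realFieldType) (p q r : 'rV[R]_3) : Prop :=
  exists l : 'rV[R]_3, l != 0 /\ on p l /\ on q l /\ on r l.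

(* cross-ratio (a, b; c, d) = r: writing c ~ a + lam b and d ~ a + mu b
   (coordinates on the line ab), the cross-ratio is lam / mu. *)
Definition cross_ratio_is (R : realFieldType) (a b c d : 'rV[R]_3) (r : R) : Prop :=
  exists lam mu : R, mu != 0 /\ same_pt c (a + lam *: b) /\
    same_pt d (a + mu *: b) /\ lam = r * mu.

Definition harmonic (R : realFieldType) (C1 C2 D1 D2 : 'rV[R]_3) : Prop :=
  cross_ratio_is C1 C2 D1 D2 (-1).

(* A polygonal line A_0 A_1 A_2 ... : genuine points, consecutive vertices
   distinct, consecutive sides distinct (A_i, A_{i+1}, A_{i+2} not collinear). *)
Definition polygonal_line (R : realFieldType) (A : nat -> 'rV[R]_3) : Prop :=
  forall i, A i != 0 /\ ~ same_pt (A i) (A i.+1) /\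
            ~ collinear (A i) (A i.+1) (A i.+2).

(* inscribed in Gamma = g1 \cup g2 and circumscribed about C* = pencils at
   C1, C2: vertices alternately on g1, g2, side lines A_i A_{i+1}
   alternately through C1, C2 (either starting choice allowed). *)
Definition inscribed_circumscribed (R : realFieldType) (g1 g2 C1 C2 : 'rV[R]_3)
  (A : nat -> 'rV[R]_3) : Prop :=
  exists b c : bool, forall i,
    on (A i) (if odd (i + b) then g2 else g1) /\
    collinear (A i) (A i.+1) (if odd (i + c) then C2 else C1).

Definition periodic_with_period (R : realFieldType) (A : nat -> 'rV[R]_3) (n : nat) : Prop :=
  (0 < n)%N /\ (forall i, same_pt (A (i + n)%N) (A i)) /\
  (forall m, (0 < m < n)%N -> ~ (forall i, same_pt (A (i + m)%N) (A i))).

(* Main.v *)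
Require Import Defs.
From HB Require Import structures.
From mathcomp Require Import all_boot all_order all_algebra.
From mathcomp Require Import ring lra.
Set Implicit Arguments. Unset Strict Implicit. Unset Printing Implicit Defensive.
Import Order.TTheory GRing.Theory Num.Theory.
Local Open Scope ring_scope.

Definition i0 : 'I_3 := @Ordinal 3 0 isT.
Definition i1 : 'I_3 := @Ordinal 3 1 isT.
Definition i2 : 'I_3 := @Ordinal 3 2 isT.

Lemma dotE (R : realFieldType) (u v : 'rV[R]_3) :
  dot u v = u 0 i0 * v 0 i0 + u 0 i1 * v 0 i1 + u 0 i2 * v 0 i2.
Proof.
rewrite /dot !big_ord_recl big_ord0 addr0 addrA.
have -> : (lift ord0 (lift ord0 ord0) : 'I_3) = i2 by apply/val_inj.
have -> : (lift ord0 ord0 : 'I_3) = i1 by apply/val_inj.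
have -> : (ord0 : 'I_3) = i0 by apply/val_inj.
by [].
Qed.

Lemma vecP (R : realFieldType) (u v : 'rV[R]_3) :
  u 0 i0 = v 0 i0 -> u 0 i1 = v 0 i1 -> u 0 i2 = v 0 i2 -> u = v.
Proof.
move=> h0 h1 h2; apply/rowP => i.
case: i => [[|[|[|//]]] Hi].
- by rewrite (_ : Ordinal Hi = i0) //; apply/val_inj.
- by rewrite (_ : Ordinal Hi = i1) //; apply/val_inj.
- by rewrite (_ : Ordinal Hi = i2) //; apply/val_inj.
Qed.

Definition mk3 (R : realFieldType) (a b c : R) : 'rV[R]_3 :=
  \row_(i < 3) (if val i == 0%N then a else if val i == 1%N then b else c).

Lemma mk3E0 (R : realFieldType) (a b c : R) : mk3 a b c 0 i0 = a.
Proof. by rewrite mxE. Qed.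
Lemma mk3E1 (R : realFieldType) (a b c : R) : mk3 a b c 0 i1 = b.
Proof. by rewrite mxE. Qed.
Lemma mk3E2 (R : realFieldType) (a b c : R) : mk3 a b c 0 i2 = c.
Proof. by rewrite mxE. Qed.

Definition cross (R : realFieldType) (u v : 'rV[R]_3) : 'rV[R]_3 :=
  mk3 (u 0 i1 * v 0 i2 - u 0 i2 * v 0 i1)
      (u 0 i2 * v 0 i0 - u 0 i0 * v 0 i2)
      (u 0 i0 * v 0 i1 - u 0 i1 * v 0 i0).

Ltac vsimp := rewrite ?dotE /cross /mk3 ?mxE /=.

Lemma cross_cross (R : realFieldType) (a b c : 'rV[R]_3) :
  cross (cross a b) c = dot a c *: b - dot b c *: a.
Proof. apply: vecP; vsimp; ring. Qed.

Lemma dotC (R : realFieldType) (u v : 'rV[R]_3) : dot u v = dot v u.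
Proof. vsimp; ring. Qed.
Lemma dotDl (R : realFieldType) (u v w : 'rV[R]_3) : dot (u + v) w = dot u w + dot v w.
Proof. vsimp; ring. Qed.
Lemma dotBl (R : realFieldType) (u v w : 'rV[R]_3) : dot (u - v) w = dot u w - dot v w.
Proof. vsimp; ring. Qed.
Lemma dotZl (R : realFieldType) (k : R) (u w : 'rV[R]_3) : dot (k *: u) w = k * dot u w.
Proof. vsimp; ring. Qed.
Lemma dot0l (R : realFieldType) (w : 'rV[R]_3) : dot 0 w = 0.
Proof. vsimp; ring. Qed.
Lemma cross0l (R : realFieldType) (w : 'rV[R]_3) : cross 0 w = 0.
Proof. apply: vecP; vsimp; ring. Qed.

Lemma scal0 (R : realFieldType) (k : R) (v : 'rV[R]_3) : k *: v = 0 -> v != 0 -> k = 0.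
Proof. by move/eqP; rewrite scaler_eq0 => /orP[/eqP|/eqP->] // ; rewrite eqxx. Qed.

Lemma dot_self (R : realFieldType) (w : 'rV[R]_3) : w != 0 -> dot w w != 0.
Proof.
move=> hw; apply/negP => /eqP h; move/negP: hw; apply; apply/eqP.
move: h; rewrite dotE => h.
have a0 : 0 <= w 0 i0 * w 0 i0 by rewrite -expr2 sqr_ge0.
have a1 : 0 <= w 0 i1 * w 0 i1 by rewrite -expr2 sqr_ge0.
have a2 : 0 <= w 0 i2 * w 0 i2 by rewrite -expr2 sqr_ge0.
have e0 : w 0 i0 * w 0 i0 = 0 by lra.
have e1 : w 0 i1 * w 0 i1 = 0 by lra.
have e2 : w 0 i2 * w 0 i2 = 0 by lra.
move/eqP: e0; move/eqP: e1; move/eqP: e2; rewrite !mulf_eq0 !orbb => /eqP e2 /eqP e1 /eqP e0.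
by apply: vecP; rewrite mxE.
Qed.

Lemma cross_ne0 (R : realFieldType) (x C g : 'rV[R]_3) :
  x != 0 -> dot x g = 0 -> dot C g != 0 -> cross x C != 0.
Proof.
move=> hx hxg hCg; apply/negP => /eqP h.
have := cross_cross x C g; rewrite h cross0l hxg scale0r add0r => /esym/eqP.
rewrite oppr_eq0 scaler_eq0 (negbTE hCg) /= => /eqP hx0.
by rewrite hx0 eqxx in hx.
Qed.

Lemma perp_cross (R : realFieldType) (x C y l : 'rV[R]_3) :
  l != 0 -> dot x l = 0 -> dot C l = 0 -> dot y l = 0 -> dot y (cross x C) = 0.
Proof.
move=> hl hx hC hy.
have h1 := cross_cross x C l; rewrite hx hC !scale0r subr0 in h1.
have h2 := cross_cross (cross x C) l y; rewrite h1 cross0l (dotC l y) hy scale0r subr0 dotC in h2.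
by apply: (scal0 (esym h2)).
Qed.

Lemma cramer (R : realFieldType) (x C y : 'rV[R]_3) :
  dot (cross x C) (cross x C) *: y =
  dot y (cross C (cross x C)) *: x + dot y (cross (cross x C) x) *: C
  + dot y (cross x C) *: cross x C.
Proof. apply: vecP; vsimp; ring. Qed.

Lemma step (R : realFieldType) (x y C g g' : 'rV[R]_3) :
  x != 0 -> dot x g = 0 -> dot C g != 0 -> dot C g' != 0 -> y != 0 ->
  dot y g' = 0 -> collinear x y C ->
  exists t, t != 0 /\ y = t *: (dot x g' *: C - dot C g' *: x).
Proof.
move=> hx hxg hCg hCg' hy hyg [l [hl [hxl [hyl hCl]]]].
set w := cross x C.
have hw : w != 0 by apply: cross_ne0 hx hxg hCg.
have hyw : dot y w = 0 by apply: perp_cross hl hxl hCl hyl.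
have hww := dot_self hw.
set al := dot y (cross C w) / dot w w.
set be := dot y (cross w x) / dot w w.
have ey : y = al *: x + be *: C.
  have := cramer x C y; rewrite -/w hyw scale0r addr0 => e.
  apply: (@scalerI _ _ (dot w w)) => //.
  by rewrite e scalerDr !scalerA /al /be !(mulrC (dot w w)) !divfK.
have hbe : be = - al * dot x g' / dot C g'.
  move: hyg; rewrite ey dotDl !dotZl => e.
  apply: (mulIf hCg'); rewrite divfK //.
  by move/eqP: e; rewrite addrC addr_eq0 => /eqP ->; rewrite mulNr.
exists (- al / dot C g'); split.
  rewrite mulf_neq0 // ?invr_eq0 // oppr_eq0; apply/negP => /eqP a0.
  move: hy; rewrite ey hbe a0 !scale0r add0r.
  by rewrite oppr0 !mul0r scale0r eqxx.
rewrite ey hbe; move: (dot x g') (dot C g') hCg' => s c hc.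
by apply: vecP; vsimp; field.
Qed.
Fixpoint cseq {R : realFieldType} (r k : R) (n : nat) : R :=
  match n with 0%N => 0 | n'.+1 => r * cseq r k n' + k ^+ n' end.

Lemma cseq_mul (R : realFieldType) (r k : R) n : cseq r k n * (r - k) = r ^+ n - k ^+ n.
Proof.
elim: n => [|n IH] /=; first by rewrite mul0r expr0 subrr.
by rewrite mulrDl -mulrA IH !exprS; ring.
Qed.

Lemma cseq_eq (R : realFieldType) (k : R) n : cseq k k n = n%:R * k ^+ n.-1.
Proof.
elim: n => [|n IH] /=; first by rewrite mul0r.
rewrite IH; case: n {IH} => [|n] /=; first by rewrite mul0r mulr0 add0r mul1r.
by rewrite exprS; ring.
Qed.

Lemma cseq_opp (R : realFieldType) (k : R) n :
  cseq (- k) k n = if odd n then k ^+ n.-1 else 0.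
Proof.
elim: n => [|n IH] //=; rewrite IH; case: n {IH} => [|n] /=.
  by rewrite mulr0 add0r.
case: (odd n) => /=; first by rewrite mulr0 add0r.
by rewrite exprS; ring.
Qed.

Lemma cseq0 (R : realFieldType) (r k : R) n :
  k != 0 -> (0 < n)%N -> cseq r k n = 0 -> r = - k /\ ~~ odd n.
Proof.
move=> hk hn hc.
have [erk|nrk] := eqVneq r k.
  move: hc; rewrite erk cseq_eq => /eqP; rewrite mulf_eq0 expf_eq0 (negbTE hk) andbF orbF.
  by rewrite pnatr_eq0 => /eqP n0; rewrite n0 in hn.
have ex : r ^+ n = k ^+ n by apply/eqP; rewrite -subr_eq0 -cseq_mul hc mul0r.
have en : `|r| = `|k|.
  apply/eqP; rewrite -(eqrXn2 hn) ?normr_ge0 // -!normrX ex //.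
have e2 : r ^+ 2 = k ^+ 2 by rewrite -(real_normK (num_real r)) en real_normK ?num_real.
move/eqP: e2; rewrite eqf_sqr (negbTE nrk) /= => /eqP er.
split => //; move: hc; rewrite er cseq_opp; case: (odd n) => //.
by move/eqP; rewrite expf_eq0 (negbTE hk) andbF.
Qed.

Lemma same_sym (R : realFieldType) (p q : 'rV[R]_3) : same_pt p q -> same_pt q p.
Proof.
move=> [k [hk ->]]; exists k^-1; split; first by rewrite invr_eq0.
by rewrite scalerA mulVf // scale1r.
Qed.

Lemma on_same (R : realFieldType) (p q l : 'rV[R]_3) : same_pt p q -> on p l -> on q l.
Proof.
move=> [k [hk ->]]; rewrite /on dotZl => /eqP; rewrite mulf_eq0 (negbTE hk) /=.
by move/eqP.
Qed.

Definition chain (R : realFieldType) (g g' C C' : 'rV[R]_3) (B : nat -> 'rV[R]_3) : Prop :=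
  forall j, B j != 0 /\ ~ same_pt (B j) (B j.+1) /\ ~ collinear (B j) (B j.+1) (B j.+2) /\
  on (B j) (if odd j then g' else g) /\ collinear (B j) (B j.+1) (if odd j then C' else C).

Definition nd (R : realFieldType) (g g' C C' : 'rV[R]_3) : Prop :=
  dot C g != 0 /\ dot C g' != 0 /\ dot C' g != 0 /\ dot C' g' != 0.

Lemma nd_swap (R : realFieldType) (g g' C C' : 'rV[R]_3) : nd g g' C C' -> nd g' g C' C.
Proof. by move=> [? [? [? ?]]]; do !split. Qed.

Lemma chain_shift1 (R : realFieldType) (g g' C C' : 'rV[R]_3) B :
  chain g g' C C' B -> chain g' g C' C (fun j => B j.+1).
Proof. by move=> h j; have := h j.+1; rewrite /=; case: (odd j). Qed.

Lemma chain_shift (R : realFieldType) (g g' C C' : 'rV[R]_3) B k :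
  chain g g' C C' B -> chain g g' C C' (fun j => B (k.*2 + j)%N).
Proof.
move=> h j; have := h (k.*2 + j)%N; rewrite oddD odd_double /= !addnS; done.
Qed.

Lemma chain_one (R : realFieldType) (g g' C C' : 'rV[R]_3) B :
  nd g g' C C' -> chain g g' C C' B ->
  exists t, t != 0 /\ B 1%N = t *: (dot (B 0%N) g' *: C - dot C g' *: B 0%N).
Proof.
move=> [h1 [h2 _]] h.
have [hB0 [_ [_ [hon hcol]]]] := h 0%N.
have [hB1 [_ [_ [hon1 _]]]] := h 1%N.
exact: step hB0 hon h1 h2 hB1 hon1 hcol.
Qed.

Lemma chain_sigma (R : realFieldType) (g g' C C' : 'rV[R]_3) B :
  nd g g' C C' -> chain g g' C C' B -> dot (B 0%N) g' != 0.
Proof.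
move=> hn h; have [t [ht e]] := chain_one hn h.
have [_ [hs _]] := h 0%N.
apply/negP => /eqP s0; apply: hs; apply: same_sym.
exists (t * - dot C g'); split.
  by rewrite mulf_neq0 // oppr_eq0; case: hn => _ [].
by rewrite e s0 scale0r add0r -scaleNr scalerA.
Qed.

Definition Ev (R : realFieldType) (g C C' : 'rV[R]_3) := dot C g *: C' - dot C' g *: C.

Lemma chain_two (R : realFieldType) (g g' C C' : 'rV[R]_3) B :
  nd g g' C C' -> chain g g' C C' B ->
  exists t, t != 0 /\ B 2%N = t *: (dot (B 0%N) g' *: Ev g C C' + (dot C' g * dot C g') *: B 0%N).
Proof.
move=> hn h; have [t [ht e1]] := chain_one hn h.
have [t' [ht' e2]] := chain_one (nd_swap hn) (chain_shift1 h).
have [_ [_ [_ [hon _]]]] := h 0%N.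
exists (t' * t); split; first by rewrite mulf_neq0.
rewrite e2 /= e1 dotZl dotBl !dotZl /on /= in hon *; rewrite hon mulr0 subr0 /Ev.
move: (dot (B 0%N) g') (dot C g) (dot C' g) (dot C g') => s a b c.
by apply: vecP; vsimp; ring.
Qed.

Lemma chain_iter (R : realFieldType) (g g' C C' : 'rV[R]_3) B :
  nd g g' C C' -> chain g g' C C' B ->
  forall n, exists t, t != 0 /\
    B n.*2 = t *: ((cseq (dot (Ev g C C') g' + dot C' g * dot C g') (dot C' g * dot C g') n
                    * dot (B 0%N) g') *: Ev g C C'
                   + (dot C' g * dot C g') ^+ n *: B 0%N).
Proof.
move=> hn h; elim=> [|n [t [ht e]]].
  by exists 1; split; [exact: oner_neq0 | rewrite /= mul0r scale0r add0r expr0 !scale1r].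
have [s [hs e2]] := chain_two hn (chain_shift n h).
exists (s * t); split; first by rewrite mulf_neq0.
rewrite (_ : (n.+1).*2 = (n.*2 + 2)%N); last by rewrite doubleS addn2.
move: e2; rewrite /= addn0 => ->.
rewrite e dotZl dotDl !dotZl /= exprS.
move: (Ev g C C') (dot (Ev g C C') g') (dot C' g * dot C g') (dot (B 0%N) g')
  (cseq (dot (Ev g C C') g' + dot C' g * dot C g') (dot C' g * dot C g') n) => E eg k s0 c.
move: (k ^+ n) => kn.
by apply: vecP; vsimp; ring.
Qed.

Definition Hq (R : realFieldType) (g g' C C' : 'rV[R]_3) :=
  dot C g * dot C' g' + dot C' g * dot C g'.

Lemma rhoE (R : realFieldType) (g g' C C' : 'rV[R]_3) :
  dot (Ev g C C') g' + dot C' g * dot C g' = dot C g * dot C' g'.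
Proof. by rewrite /Ev dotBl !dotZl; ring. Qed.

Lemma chain_not2 (R : realFieldType) (g g' C C' : 'rV[R]_3) B :
  chain g g' C C' B -> ~ same_pt (B 2%N) (B 0%N).
Proof.
move=> h [k [hk e]].
have [_ [_ [hc [_ [l [hl [h0 [h1 _]]]]]]]] := h 0%N.
apply: hc; exists l; do !split => //.
by rewrite /on e dotZl h0 mulr0.
Qed.

Lemma chain_four (R : realFieldType) (g g' C C' : 'rV[R]_3) B :
  nd g g' C C' -> chain g g' C C' B -> Hq g g' C C' = 0 -> same_pt (B 4%N) (B 0%N).
Proof.
move=> hn h hH; have [t [ht e]] := chain_iter hn h 2.
have -> : (4 = 2.*2)%N by [].
rewrite e /= mulr0 add0r expr0 mulr1 expr1 rhoE.
have -> : dot C g * dot C' g' + dot C' g * dot C g' = 0 by rewrite -hH.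
rewrite mul0r scale0r add0r scalerA; exists (t * (dot C' g * dot C g') ^+ 2); split => //.
case: hn => [h1 [h2 [h3 h4]]].
by rewrite !mulf_neq0 // expf_neq0 // mulf_neq0.
Qed.

Lemma chain_period (R : realFieldType) (g g' C C' : 'rV[R]_3) B k :
  nd g g' C C' -> chain g g' C C' B -> (0 < k)%N -> same_pt (B k.*2) (B 0%N) ->
  Hq g g' C C' = 0 /\ ~~ odd k.
Proof.
move=> hn h hk [la [hla ela]].
have [t [ht e]] := chain_iter hn h k.
have hkap : dot C' g * dot C g' != 0 by case: hn => [h1 [h2 [h3 h4]]]; rewrite mulf_neq0.
set rho := dot (Ev g C C') g' + dot C' g * dot C g' in e.
set c := cseq rho (dot C' g * dot C g') k in e.
have [c0|cn0] := eqVneq c 0.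
  have [er ek] := cseq0 hkap hk c0; split => //.
  by move: er; rewrite /rho rhoE /Hq => ->; ring.
exfalso.
have hs0 := chain_sigma hn h.
set E := Ev g C C' in e.
set x := B 0%N in e ela hs0.
set a := c * dot x g' in e.
set b := (dot C' g * dot C g') ^+ k in e.
have ha : a != 0 by rewrite mulf_neq0.
have e2 : a *: E = (t^-1 * la - b) *: x.
  by rewrite scalerBl -(scalerA t^-1 la x) -ela e scalerA mulVf // scale1r addrK.
have eE : E = (a^-1 * (t^-1 * la - b)) *: x.
  by rewrite -scalerA -e2 scalerA mulVf // scale1r.
have [s [hs e3]] := chain_two hn h.
apply: (chain_not2 h).
set m := s * (dot x g' * (a^-1 * (t^-1 * la - b)) + dot C' g * dot C g').
have hm : m != 0.
  apply/negP => /eqP m0; have [hB2 _] := h 2%N; move: hB2.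
  rewrite e3 -/x -/E eE scalerA -scalerDl scalerA -/m.
  by rewrite /m in m0 *; rewrite m0 scale0r eqxx.
exists m; split => //.
by rewrite e3 -/x -/E eE scalerA -scalerDl scalerA.
Qed.

Definition sel (R : realFieldType) (p : bool) (u v : 'rV[R]_3) := if p then v else u.

Lemma main_chain (R : realFieldType) (g1 g2 C1 C2 : 'rV[R]_3) (A : nat -> 'rV[R]_3) (b c : bool) :
  polygonal_line A ->
  (forall i, on (A i) (if odd (i + b) then g2 else g1) /\
             collinear (A i) (A i.+1) (if odd (i + c) then C2 else C1)) ->
  forall i, chain (sel (odd (i + b)) g1 g2) (sel (~~ odd (i + b)) g1 g2)
                  (sel (odd (i + c)) C1 C2) (sel (~~ odd (i + c)) C1 C2)
                  (fun j => A (i + j)%N).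
Proof.
move=> hp hic i j.
have [h1 [h2 h3]] := hp (i + j)%N.
have [h4 h5] := hic (i + j)%N.
rewrite !addnS in h2 h3 h5 *.
do !split => //.
  by move: h4; rewrite -addnA (addnC j) addnA oddD /sel; case: (odd j); case: (odd (i + b)).
by move: h5; rewrite -addnA (addnC j) addnA oddD /sel; case: (odd j); case: (odd (i + c)).
Qed.

Lemma main_nd (R : realFieldType) (g1 g2 C1 C2 : 'rV[R]_3) p q :
  ~ on C1 g1 -> ~ on C1 g2 -> ~ on C2 g1 -> ~ on C2 g2 ->
  nd (sel p g1 g2) (sel (~~ p) g1 g2) (sel q C1 C2) (sel (~~ q) C1 C2).
Proof.
move=> a b c d.
have a' : dot C1 g1 != 0 by apply/eqP.
have b' : dot C1 g2 != 0 by apply/eqP.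
have c' : dot C2 g1 != 0 by apply/eqP.
have d' : dot C2 g2 != 0 by apply/eqP.
by rewrite /nd /sel; case: p; case: q.
Qed.

Lemma main_Hq (R : realFieldType) (g1 g2 C1 C2 : 'rV[R]_3) p q :
  Hq (sel p g1 g2) (sel (~~ p) g1 g2) (sel q C1 C2) (sel (~~ q) C1 C2) = Hq g1 g2 C1 C2.
Proof. by rewrite /Hq /sel; case: p; case: q => /=; ring. Qed.

Lemma harm_Hq (R : realFieldType) (g1 g2 C1 C2 D1 D2 : 'rV[R]_3) :
  on D1 g1 -> on D2 g2 -> harmonic C1 C2 D1 D2 -> Hq g1 g2 C1 C2 = 0.
Proof.
move=> h1 h2 [lam [mu [hmu [s1 [s2 el]]]]].
have := on_same s1 h1; have := on_same s2 h2.
rewrite /on !dotDl !dotZl => /eqP; rewrite addr_eq0 => /eqP e2 /eqP; rewrite addr_eq0 => /eqP e1.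
by rewrite /Hq e1 e2 el; ring.
Qed.

Lemma cross_ne0' (R : realFieldType) (C1 C2 g : 'rV[R]_3) :
  ~ same_pt C1 C2 -> dot C1 g != 0 -> dot C2 g != 0 -> cross C1 C2 != 0.
Proof.
move=> hs ha hc; apply/negP => /eqP h0.
have := cross_cross C1 C2 g; rewrite h0 cross0l => /esym/eqP; rewrite subr_eq0 => /eqP e.
apply: hs; exists (dot C1 g / dot C2 g); split; first by rewrite mulf_neq0 // invr_eq0.
by rewrite mulrC -scalerA e scalerA mulVf // scale1r.
Qed.

Lemma Hq_harm (R : realFieldType) (g1 g2 C1 C2 : 'rV[R]_3) :
  ~ same_pt C1 C2 -> ~ on C1 g1 -> ~ on C1 g2 -> ~ on C2 g1 -> ~ on C2 g2 ->
  Hq g1 g2 C1 C2 = 0 ->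
  exists D1 D2 : 'rV[R]_3,
         D1 != 0 /\ D2 != 0 /\ on D1 g1 /\ on D2 g2 /\
         collinear C1 C2 D1 /\ collinear C1 C2 D2 /\ harmonic C1 C2 D1 D2.
Proof.
move=> hs a b c d hH.
have a' : dot C1 g1 != 0 by apply/eqP.
have b' : dot C1 g2 != 0 by apply/eqP.
have c' : dot C2 g1 != 0 by apply/eqP.
have d' : dot C2 g2 != 0 by apply/eqP.
set lam := - (dot C1 g1 / dot C2 g1).
set mu := - (dot C1 g2 / dot C2 g2).
have hl : lam != 0 by rewrite oppr_eq0 mulf_neq0 // invr_eq0.
have hm : mu != 0 by rewrite oppr_eq0 mulf_neq0 // invr_eq0.
have nz : forall k, k != 0 -> C1 + k *: C2 != 0.
  move=> k hk; apply/negP; rewrite addr_eq0 -scaleNr => /eqP e.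
  by apply: hs; exists (- k); rewrite oppr_eq0.
have hcr := cross_ne0' hs a' c'.
have col : forall k, collinear C1 C2 (C1 + k *: C2).
  move=> k; exists (cross C1 C2); split => //.
  by rewrite /on !dotDl !dotZl; split; [|split]; vsimp; ring.
exists (C1 + lam *: C2), (C1 + mu *: C2).
do !split; try exact: nz; try exact: col.
- by rewrite /on dotDl dotZl /lam; field.
- by rewrite /on dotDl dotZl /mu; field.
exists lam, mu; do !split => //.
- by exists 1; rewrite oner_neq0 scale1r.
- by exists 1; rewrite oner_neq0 scale1r.
have ea : dot C1 g1 = - (dot C2 g1 * dot C1 g2) / dot C2 g2.
  apply: (mulIf d'); rewrite divfK //.
  by move/eqP: hH; rewrite /Hq addr_eq0 => /eqP ->.
rewrite /lam /mu ea; field; by rewrite d' c'.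
Qed.

Theorem theorem3p15 (R : realFieldType) (g1 g2 C1 C2 : 'rV[R]_3) :
  g1 != 0 -> g2 != 0 -> ~ same_pt g1 g2 ->
  C1 != 0 -> C2 != 0 -> ~ same_pt C1 C2 ->
  ~ on C1 g1 -> ~ on C1 g2 -> ~ on C2 g1 -> ~ on C2 g2 ->
  forall A : nat -> 'rV[R]_3,
    polygonal_line A -> inscribed_circumscribed g1 g2 C1 C2 A ->
    forall n : nat,
      periodic_with_period A n <->
      (n = 4%N /\
       exists D1 D2 : 'rV[R]_3,
         D1 != 0 /\ D2 != 0 /\ on D1 g1 /\ on D2 g2 /\
         collinear C1 C2 D1 /\ collinear C1 C2 D2 /\ harmonic C1 C2 D1 D2).
Proof.
move=> _ _ _ _ _ hs a1 b1 c1 d1 A hp [b [c hic]] n.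
have ch := main_chain hp hic.
have hnd : forall p q, nd (sel p g1 g2) (sel (~~ p) g1 g2) (sel q C1 C2) (sel (~~ q) C1 C2).
  by move=> p q; apply: main_nd.
have four : Hq g1 g2 C1 C2 = 0 -> forall i, same_pt (A (i + 4)%N) (A i).
  move=> hH i; have := chain_four (hnd _ _) (ch i); rewrite main_Hq addn0 => /(_ hH).
  done.
have ch0 := ch 0%N; rewrite /= in ch0.
have hsig := chain_sigma (hnd _ _) ch0.
have nodd : forall m, odd m -> ~ same_pt (A m) (A 0%N).
  move=> m hm hsm; have [_ [_ [_ [hon _]]]] := ch0 m.
  rewrite hm in hon; have := on_same hsm hon.
  rewrite /on => h0; move: hsig; rewrite /= h0 eqxx; done.
split.
- move=> [hn [hper hmin]].
  have hsn : same_pt (A n) (A 0%N) by have := hper 0%N; rewrite add0n.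
  have [hodd|heven] := boolP (odd n); first by exfalso; exact: nodd hodd hsn.
  have en := even_halfK heven.
  have hk : (0 < n./2)%N by rewrite -double_gt0 en.
  have hH2 : same_pt (A (n./2).*2) (A 0%N) by rewrite en.
  have [hH hk2] := chain_period (hnd _ _) ch0 hk hH2; rewrite main_Hq in hH.
  have n4 : (n <= 4)%N.
    rewrite leqNgt; apply/negP => h4; apply: (hmin 4%N) => //; exact: four hH.
  have e4 : n = 4%N.
    by move: hk2 hk n4; rewrite -en; case: (n./2) => [|[|[|[|k]]]].
  split => //; exact: Hq_harm.
- move=> [-> [D1 [D2 [_ [_ [hD1 [hD2 [_ [_ hh]]]]]]]]].
  have hH := harm_Hq hD1 hD2 hh.
  split => //; split; first exact: four hH.
  move=> m /andP [m0 m4] hm.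
  have := hm 0%N; rewrite add0n.
  move: m0 m4; case: m hm => [|[|[|[|m]]]] // hm _ _.
  + have [_ [hns _]] := hp 0%N; by move=> /same_sym.
  + exact: (chain_not2 ch0).
  + exact: nodd.
Qed.
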